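(* Fix real weights $w_A,w_B\ge 0$, rate targets $r_A,r_B\ge 0$, power budgets $P_A,P_B,P_R>0$, and dual variables $\lambda_A^{b_1},\lambda_B^{b_1},\lambda_A^{c_1},\lambda_B^{c_1},\lambda_{AB}^c,\mu_A,\mu_B\ge 0$ and $\alpha_A,\alpha_B,\alpha_R>0$ such that $w_k+\mu_k-\lambda_k^{b_1}\ge 0$ and $\xi_k:=w_k+\mu_k-\lambda_k^{c_1}-\lambda_{AB}^c\ge 0$ for $k\in\{A,B\}$. Then the maximum defining the dual function $g$ (see context) is attained at some feasible $(\boldsymbol\rho^*,\boldsymbol s^* )$ for which every entry of $\boldsymbol\rho^*$ lies in $\{0,1\}$.
   Context: Setting: users $A,B$ and relay $R$, subcarriers $n\in\{1,\dots,N\}$, nonnegative channel gains $|h_{j,j',n}|^2$ from node $j$ to node $j'$ on subcarrier $n$ ($j\neq j'\in\{A,B,R\}$). For $k\in\{A,B\}$, $k'$ denotes the other user. Per subcarrier $n$, the assignment vector is $\boldsymbol\rho_n=(\rho^a_{A,n},\rho^a_{B,n},\rho^b_{A,n,1},\rho^b_{B,n,1},\rho^b_{A,n,2},\rho^b_{B,n,2},\rho^c_{n,1},\rho^c_{n,2})\in[0,1]^8$ with sum of entries $\le 1$. Power variables (all $\ge 0$): $s^a_{k,n}$ (user $k$ direct), $s^b_{k,R,n}$ (user $k$ to relay, one-way), $s^b_{R,k,n}$ (relay forwarding user $k$'s message to $k'$, one-way), $s^c_{k,R,n}$ (user $k$ to relay, two-way), $s^c_{R,n}$ (relay broadcast,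 two-way). A pair $(\boldsymbol\rho,\boldsymbol s)$ satisfying these constraints is called feasible. Define $F(\rho,x)=\rho\log_2(1+x/\rho)$ for $\rho>0$ and $F(0,x)=0$. Rates: $D_{k,n}=F(\rho^a_{k,n},s^a_{k,n}|h_{k,k',n}|^2)$; $B^1_{k,n}=F(\rho^b_{k,n,1},s^b_{k,R,n}|h_{k,R,n}|^2)$; $B^2_{k,n}=F(\rho^b_{k,n,2},s^b_{R,k,n}|h_{R,k',n}|^2)$; $C^1_{k,n}=F(\rho^c_{n,1},s^c_{k,R,n}|h_{k,R,n}|^2)$; $C^{12}_n=F(\rho^c_{n,1},s^c_{A,R,n}|h_{A,R,n}|^2+s^c_{B,R,n}|h_{B,R,n}|^2)$; $C^2_{k,n}=F(\rho^c_{n,2},s^c_{R,n}|h_{R,k',n}|^2)$. With $\xi_k=w_k+\mu_k-\lambda_k^{c_1}-\lambda_{AB}^c$, the dual function is $g=\max_{(\boldsymbol\rho,\boldsymbol s)\text{ feasible}}\Big\{\sum_{n=1}^N\sum_{k\in\{A,B\}}\big[(w_k+\mu_k)D_{k,n}+\lambda_k^{b_1}B^1_{k,n}+(w_k+\mu_k-\lambda_k^{b_1})B^2_{k,n}+\lambda_k^{c_1}C^1_{k,n}+\xi_kC^2_{k,n}\big]+\lambda_{AB}^c\sum_{n=1}^N C^{12}_n+\sum_{k\in\{A,B\}}\alpha_k\big(P_k-\sum_{n=1}^N(s^a_{k,n}+s^b_{k,R,n}+s^c_{k,R,n})\big)+\alpha_R\big(P_R-\sum_{n=1}^N(\sum_{k\in\{A,B\}}s^b_{R,k,n}+s^c_{R,n})\big)-\sum_{k\in\{A,B\}}\mu_kr_k\Big\}$.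 *)

(* Defs.v *)
From Stdlib Require Import Reals List.
Import ListNotations.
Open Scope R_scope.

Inductive user := UA | UB.
Definition other (k : user) : user := match k with UA => UB | UB => UA end.
Inductive node := NA | NB | NR.
Definition nd (k : user) : node := match k with UA => NA | UB => NB end.

Definition sum_user (f : user -> R) : R := f UA + f UB.
(* sumN N f = f 0 + ... + f (N-1); subcarrier n in the paper is index n-1 here *)
Fixpoint sumN (N : nat) (f : nat -> R) : R :=
  match N with O => 0 | S m => sumN m f + f m end.

Definition log2 (x : R) : R := ln x / ln 2.
Definition F (rho x : R) : R :=
  if Req_EM_T rho 0 then 0 else rho * log2 (1 + x / rho).

Record assign := mkAssign {
  ra  : user -> R;
  rb1 : user -> R;
  rb2 : user -> R;
  rc1 : R;
  rc2 : R
}.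
Definition entries (p : assign) : list R :=
  [ra p UA; ra p UB; rb1 p UA; rb1 p UB; rb2 p UA; rb2 p UB; rc1 p; rc2 p].

Record power := mkPower {
  sa  : user -> R;
  sbR : user -> R;
  sRb : user -> R;
  scR : user -> R;
  sRc : R
}.

(* channel gains |h_{j,j',n}|^2 *)
Definition gain := node -> node -> nat -> R.

Definition feasible (N : nat) (rho : nat -> assign) (s : nat -> power) : Prop :=
  forall n, (n < N)%nat ->
    Forall (fun x => 0 <= x <= 1) (entries (rho n)) /\
    fold_right Rplus 0 (entries (rho n)) <= 1 /\
    (forall k, 0 <= sa (s n) k /\ 0 <= sbR (s n) k /\ 0 <= sRb (s n) k /\
               0 <= scR (s n) k) /\
    0 <= sRc (s n).

Section Rates.
Variables (g : gain) (rho : nat -> assign) (s : nat -> power).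
Definition Dr (k : user) (n : nat) : R :=
  F (ra (rho n) k) (sa (s n) k * g (nd k) (nd (other k)) n).
Definition B1r (k : user) (n : nat) : R :=
  F (rb1 (rho n) k) (sbR (s n) k * g (nd k) NR n).
Definition B2r (k : user) (n : nat) : R :=
  F (rb2 (rho n) k) (sRb (s n) k * g NR (nd (other k)) n).
Definition C1r (k : user) (n : nat) : R :=
  F (rc1 (rho n)) (scR (s n) k * g (nd k) NR n).
Definition C12r (n : nat) : R :=
  F (rc1 (rho n)) (scR (s n) UA * g NA NR n + scR (s n) UB * g NB NR n).
Definition C2r (k : user) (n : nat) : R :=
  F (rc2 (rho n)) (sRc (s n) * g NR (nd (other k)) n).
End Rates.

(* the Lagrangian whose maximum over feasible (rho,s) defines the dual function g *)
Definition lagr (N : nat) (g : gain)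
  (w mu lb1 lc1 : user -> R) (lAB : R) (alpha : user -> R) (aR : R)
  (P : user -> R) (PR : R) (r : user -> R)
  (rho : nat -> assign) (s : nat -> power) : R :=
  let xi k := w k + mu k - lc1 k - lAB in
  sumN N (fun n => sum_user (fun k =>
      (w k + mu k) * Dr g rho s k n + lb1 k * B1r g rho s k n
      + (w k + mu k - lb1 k) * B2r g rho s k n + lc1 k * C1r g rho s k n
      + xi k * C2r g rho s k n))
  + lAB * sumN N (fun n => C12r g rho s n)
  + sum_user (fun k => alpha k *
      (P k - sumN N (fun n => sa (s n) k + sbR (s n) k + scR (s n) k)))
  + aR * (PR - sumN N (fun n => sum_user (fun k => sRb (s n) k) + sRc (s n)))
  - sum_user (fun k => mu k * r k).

(* Main.v *)
Require Import Defs.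
From Stdlib Require Import Reals List Lra Lia.
Import ListNotations.
Open Scope R_scope.

Lemma ln2_pos : 0 < ln 2.
Proof. pose proof ln_lt_2; lra. Qed.

Lemma ln_le_sub1 t : 0 < t -> ln t <= t - 1.
Proof.
  intros Ht. destruct (Req_dec (ln t) 0) as [E|E].
  - rewrite E. destruct (Rle_dec 1 t). lra.
    exfalso. assert (ln t < ln 1) by (apply ln_increasing; lra). rewrite ln_1 in H. lra.
  - pose proof (exp_ineq1 _ E). rewrite exp_ln in H by exact Ht. lra.
Qed.

Lemma ln_le' x y : 0 < x -> x <= y -> ln x <= ln y.
Proof.
  intros Hx Hxy. destruct (Req_dec x y) as [->|E]. lra.
  left. apply ln_increasing; lra.
Qed.

Definition L2 (z : R) : R := log2 (1 + z).

Lemma L2_0 : L2 0 = 0.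
Proof. unfold L2, log2. rewrite Rplus_0_r, ln_1. unfold Rdiv. ring. Qed.

Lemma L2_nonneg z : 0 <= z -> 0 <= L2 z.
Proof.
  intros Hz. unfold L2, log2. apply Rmult_le_pos.
  - rewrite <- ln_1. apply ln_le'; lra.
  - left. apply Rinv_0_lt_compat, ln2_pos.
Qed.

Lemma L2_add u v : 0 <= u -> 0 <= v -> L2 (u + v) <= L2 u + L2 v.
Proof.
  intros Hu Hv. unfold L2, log2. pose proof ln2_pos.
  assert (ln (1 + (u + v)) <= ln (1 + u) + ln (1 + v)).
  { rewrite <- ln_mult by lra. apply ln_le'. lra. nra. }
  unfold Rdiv. rewrite <- Rmult_plus_distr_r.
  apply Rmult_le_compat_r. left; apply Rinv_0_lt_compat; lra. exact H0.
Qed.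

Lemma log_lin_bound c a e : 0 <= c -> 0 <= a -> 0 < e ->
  exists C, 0 <= C /\ forall z, 0 <= z -> c * L2 (z * a) <= C + e * z.
Proof.
  intros Hc Ha He. pose proof ln2_pos as H2.
  set (K := c * a / (e * ln 2) + 1).
  assert (HK : 1 <= K).
  { unfold K. assert (0 <= c * a / (e * ln 2)).
    { unfold Rdiv. apply Rmult_le_pos. nra. left. apply Rinv_0_lt_compat. nra. }
    lra. }
  exists (c * ln K / ln 2). split.
  { unfold Rdiv. apply Rmult_le_pos. apply Rmult_le_pos. lra.
    rewrite <- ln_1. apply ln_le'; lra. left; apply Rinv_0_lt_compat; lra. }
  intros z Hz. unfold L2, log2.
  assert (Hza : 0 <= z * a) by nra.
  assert (Hl : ln (1 + z * a) <= ln K + (1 + z * a) / K - 1).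
  { replace (ln (1 + z * a)) with (ln K + ln ((1 + z * a) / K)).
    - pose proof (ln_le_sub1 ((1 + z * a) / K)).
      assert (0 < (1 + z * a) / K) by (unfold Rdiv; apply Rmult_lt_0_compat; [lra| apply Rinv_0_lt_compat; lra]).
      specialize (H H0). lra.
    - rewrite <- ln_mult. f_equal. field. lra. lra.
      unfold Rdiv; apply Rmult_lt_0_compat; [lra| apply Rinv_0_lt_compat; lra]. }
  assert (Hl2 : ln (1 + z * a) <= ln K + z * a / K).
  { assert ((1 + z * a) / K - 1 <= z * a / K).
    { unfold Rdiv. assert (/ K <= 1).
      { rewrite <- Rinv_1. apply Rinv_le_contravar; lra. }
      nra. }
    lra. }
  assert (Hk : c * (z * a / K) / ln 2 <= e * z).
  { assert (E : K * (e * ln 2) = c * a + e * ln 2) by (unfold K; field; nra).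
    apply (Rmult_le_reg_r (K * ln 2)). nra.
    replace (c * (z * a / K) / ln 2 * (K * ln 2)) with (c * a * z) by (field; split; lra).
    replace (e * z * (K * ln 2)) with (z * (K * (e * ln 2))) by ring. rewrite E. assert (0 <= z * (e * ln 2)) by (apply Rmult_le_pos; nra). nra. }
  assert (c * (ln (1 + z * a) / ln 2) <= c * ((ln K + z * a / K) / ln 2)).
  { apply Rmult_le_compat_l. lra. unfold Rdiv. apply Rmult_le_compat_r.
    left; apply Rinv_0_lt_compat; lra. exact Hl2. }
  replace (c * ((ln K + z * a / K) / ln 2)) with (c * ln K / ln 2 + c * (z * a / K) / ln 2) in H by (field; lra).
  lra.
Qed.

Definition psi (c1 c2 c3 c4 a1 a2 a3 b1 b2 x y : R) : R :=
  c1 * L2 (x*a1) + c2 * L2 (y*a2) + c3 * L2 (x*a1 + y*a2) + c4 * L2 (x*a3) - b1*x - b2*y.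

Definition Gam (c1 c2 c3 c4 a1 a2 a3 b1 b2 rho x y : R) : R :=
  c1 * F rho (x*a1) + c2 * F rho (y*a2) + c3 * F rho (x*a1 + y*a2) + c4 * F rho (x*a3) - b1*x - b2*y.
Arguments Gam : simpl never.
Arguments psi : simpl never.

Lemma psi_bound c1 c2 c3 c4 a1 a2 a3 b1 b2 :
  0 <= c1 -> 0 <= c2 -> 0 <= c3 -> 0 <= c4 -> 0 <= a1 -> 0 <= a2 -> 0 <= a3 ->
  0 < b1 -> 0 < b2 ->
  exists C, 0 <= C /\ forall x y, 0 <= x -> 0 <= y ->
    psi c1 c2 c3 c4 a1 a2 a3 b1 b2 x y <= C - b1/2 * x - b2/2 * y.
Proof.
  intros Hc1 Hc2 Hc3 Hc4 Ha1 Ha2 Ha3 Hb1 Hb2.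
  destruct (log_lin_bound c1 a1 (b1/6)) as [C1 [HC1 H1]]; try lra.
  destruct (log_lin_bound c3 a1 (b1/6)) as [C3 [HC3 H3]]; try lra.
  destruct (log_lin_bound c4 a3 (b1/6)) as [C4 [HC4 H4]]; try lra.
  destruct (log_lin_bound c2 a2 (b2/4)) as [C2 [HC2 H2]]; try lra.
  destruct (log_lin_bound c3 a2 (b2/4)) as [C5 [HC5 H5]]; try lra.
  exists (C1 + C2 + C3 + C4 + C5). split. lra.
  intros x y Hx Hy. unfold psi.
  assert (c3 * L2 (x * a1 + y * a2) <= c3 * L2 (x*a1) + c3 * L2 (y * a2)).
  { rewrite <- Rmult_plus_distr_l. apply Rmult_le_compat_l. lra. apply L2_add; nra. }
  specialize (H1 x Hx). specialize (H3 x Hx). specialize (H4 x Hx).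
  specialize (H2 y Hy). specialize (H5 y Hy). lra.
Qed.

Lemma F0 z : F 0 z = 0.
Proof. unfold F. destruct (Req_EM_T 0 0); [reflexivity| congruence]. Qed.

Lemma Fpos r z : 0 < r -> F r z = r * L2 (z / r).
Proof. intros. unfold F, L2. destruct (Req_EM_T r 0). lra. reflexivity. Qed.

Lemma F1 z : F 1 z = L2 z.
Proof. rewrite Fpos by lra. unfold Rdiv. rewrite Rinv_1, Rmult_1_r. ring. Qed.

Lemma Gam_hom c1 c2 c3 c4 a1 a2 a3 b1 b2 r x y : 0 < r ->
  Gam c1 c2 c3 c4 a1 a2 a3 b1 b2 r x y = r * psi c1 c2 c3 c4 a1 a2 a3 b1 b2 (x/r) (y/r).
Proof.
  intros Hr. unfold Gam, psi. rewrite !Fpos by exact Hr.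
  replace (x * a1 / r) with (x / r * a1) by (field; lra).
  replace (y * a2 / r) with (y / r * a2) by (field; lra).
  replace ((x * a1 + y * a2) / r) with (x / r * a1 + y / r * a2) by (field; lra).
  replace (x * a3 / r) with (x / r * a3) by (field; lra).
  field. lra.
Qed.

Lemma Gam1 c1 c2 c3 c4 a1 a2 a3 b1 b2 x y :
  Gam c1 c2 c3 c4 a1 a2 a3 b1 b2 1 x y = psi c1 c2 c3 c4 a1 a2 a3 b1 b2 x y.
Proof. unfold Gam, psi. rewrite !F1. reflexivity. Qed.

Lemma Gam0 c1 c2 c3 c4 a1 a2 a3 b1 b2 x y :
  Gam c1 c2 c3 c4 a1 a2 a3 b1 b2 0 x y = - b1 * x - b2 * y.
Proof. unfold Gam. rewrite !F0. ring. Qed.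

Lemma psi00 c1 c2 c3 c4 a1 a2 a3 b1 b2 : psi c1 c2 c3 c4 a1 a2 a3 b1 b2 0 0 = 0.
Proof. unfold psi. rewrite !Rmult_0_l, Rplus_0_l, L2_0. ring. Qed.

Lemma Gam_bound c1 c2 c3 c4 a1 a2 a3 b1 b2 xs ys r x y :
  0 <= b1 -> 0 <= b2 ->
  (forall u v, 0 <= u -> 0 <= v -> psi c1 c2 c3 c4 a1 a2 a3 b1 b2 u v <= psi c1 c2 c3 c4 a1 a2 a3 b1 b2 xs ys) ->
  0 <= r -> 0 <= x -> 0 <= y ->
  Gam c1 c2 c3 c4 a1 a2 a3 b1 b2 r x y <= r * psi c1 c2 c3 c4 a1 a2 a3 b1 b2 xs ys.
Proof.
  intros Hb1 Hb2 Hmax Hr Hx Hy. destruct Hr as [Hr|Hr].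
  - rewrite Gam_hom by exact Hr. apply Rmult_le_compat_l. lra. apply Hmax.
    + unfold Rdiv. apply Rmult_le_pos. lra. left; apply Rinv_0_lt_compat; lra.
    + unfold Rdiv. apply Rmult_le_pos. lra. left; apply Rinv_0_lt_compat; lra.
  - subst r. rewrite Gam0. nra.
Qed.

Module MC.
From mathcomp Require Import all_boot all_order all_algebra.
From mathcomp Require Import all_classical all_reals all_analysis.
From mathcomp Require Import Rstruct Rstruct_topology.
Import Order.TTheory GRing.Theory Num.Theory.
Import numFieldNormedType.Exports.
Local Open Scope classical_set_scope.
Local Open Scope ring_scope.

Lemma evt2 (f : R * R -> R) (M : R) : Rle 0 M ->
  (forall p : R * R, {for p, continuous f}) ->
  exists p : R * R, (Rle 0 p.1 /\ Rle p.1 M) /\ (Rle 0 p.2 /\ Rle p.2 M) /\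
    forall q : R * R, Rle 0 q.1 -> Rle q.1 M -> Rle 0 q.2 -> Rle q.2 M -> Rle (f q) (f p).
Proof.
move=> /RleP M0 fc.
have A0 : (`[0, M] `*` `[0, M] : set (R * R)) !=set0.
  by exists (0, 0); split => /=; rewrite in_itv /= lexx M0.
have cA : compact (`[0, M] `*` `[0, M] : set (R * R)).
  by apply: compact_setX; exact: segment_compact.
have [c cA' cmax] := compact_EVT_max A0 cA (continuous_subspaceT fc).
move: cA'; rewrite inE => -[/=]; rewrite !in_itv /= => /andP[c1 c2] /andP[c3 c4].
exists c; split; first by split; apply/RleP.
split; first by split; apply/RleP.
move=> q /RleP q1 /RleP q2 /RleP q3 /RleP q4; apply/RleP; apply: cmax.
by rewrite inE; split; rewrite /= in_itv /= ?q1 ?q2 ?q3 ?q4.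
Qed.

Lemma cD (f g : R * R -> R) p : {for p, continuous f} -> {for p, continuous g} ->
  {for p, continuous (fun q => Rplus (f q) (g q))}.
Proof. move=> Hf Hg; exact: (@continuousD R R^o _ f g p Hf Hg). Qed.

Lemma cB (f g : R * R -> R) p : {for p, continuous f} -> {for p, continuous g} ->
  {for p, continuous (fun q => Rminus (f q) (g q))}.
Proof. move=> Hf Hg; exact: (@continuousB R R^o _ f g p Hf Hg). Qed.

Lemma cM (f g : R * R -> R) p : {for p, continuous f} -> {for p, continuous g} ->
  {for p, continuous (fun q => Rmult (f q) (g q))}.
Proof.
move=> Hf Hg.
have h : {for p, continuous (f \* g)} by exact: continuousM.
exact: h.
Qed.

Lemma cc (c : R) p : {for p, continuous (fun _ : R * R => c)}.
Proof. exact: cst_continuous. Qed.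

Lemma cabs1 p : {for p, continuous (fun q : R * R => Rabs q.1)}.
Proof.
have h : {for p, continuous ((fun x : R => `|x|) \o (fun q : R * R => q.1))}.
  apply: continuous_comp; first exact: cvg_fst.
  exact: (@norm_continuous _ R^o).
have -> : (fun q : R * R => Rabs q.1) = (fun x : R => `|x|) \o (fun q : R * R => q.1).
  by apply: funext => x /=; rewrite RabsE.
exact: h.
Qed.

Lemma cabs2 p : {for p, continuous (fun q : R * R => Rabs q.2)}.
Proof.
have h : {for p, continuous ((fun x : R => `|x|) \o (fun q : R * R => q.2))}.
  apply: continuous_comp; first exact: cvg_snd.
  exact: (@norm_continuous _ R^o).
have -> : (fun q : R * R => Rabs q.2) = (fun x : R => `|x|) \o (fun q : R * R => q.2).
  by apply: funext => x /=; rewrite RabsE.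
exact: h.
Qed.

Lemma cL2 (f : R * R -> R) p : Rle 0 (f p) -> {for p, continuous f} ->
  {for p, continuous (fun q => L2 (f q))}.
Proof.
move=> /RleP f0 Hf.
have h : {for p, continuous ((fun z : R => @exp.ln R (1 + z) * (Rpower.ln 2)^-1) \o f)}.
  apply: continuous_comp => //.
  have h2 : {for (f p), continuous ((@exp.ln R \o (fun z : R => 1 + z)) \* (fun _ => (Rpower.ln 2)^-1))}.
    apply: continuousM; last exact: cst_continuous.
    apply: continuous_comp.
      by apply: continuousD; [exact: cst_continuous|exact: cvg_id].
    by apply: continuous_ln; rewrite ltr_wpDr // ler01.
  exact: h2.
have -> : (fun q => L2 (f q)) = ((fun z : R => @exp.ln R (1 + z) * (Rpower.ln 2)^-1) \o f).
  by apply: funext => x /=; rewrite /L2 /log2 RlnE.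
exact: h.
Qed.


Lemma psi_abs_cont c1 c2 c3 c4 a1 a2 a3 b1 b2 (p : R * R) :
  Rle 0 a1 -> Rle 0 a2 -> Rle 0 a3 ->
  {for p, continuous (fun q : R * R => psi c1 c2 c3 c4 a1 a2 a3 b1 b2 (Rabs q.1) (Rabs q.2))}.
Proof.
move=> Ha1 Ha2 Ha3.
have L1 : forall a, Rle 0 a -> {for p, continuous (fun q : R * R => Rmult (Rabs q.1) a)}.
  by move=> a _; apply: cM; [exact: cabs1|exact: cc].
have L2' : forall a, Rle 0 a -> {for p, continuous (fun q : R * R => Rmult (Rabs q.2) a)}.
  by move=> a _; apply: cM; [exact: cabs2|exact: cc].
have P1 : forall a, Rle 0 a -> Rle 0 (Rmult (Rabs p.1) a).
  by move=> a Ha; apply: Rmult_le_pos => //; exact: Rabs_pos.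
have P2 : forall a, Rle 0 a -> Rle 0 (Rmult (Rabs p.2) a).
  by move=> a Ha; apply: Rmult_le_pos => //; exact: Rabs_pos.
rewrite /psi.
apply: cB; last by apply: cM; [exact: cc|exact: cabs2].
apply: cB; last by apply: cM; [exact: cc|exact: cabs1].
apply: cD; last by apply: cM; [exact: cc|apply: cL2; [exact: P1|exact: L1]].
apply: cD; last first.
  apply: cM; first exact: cc.
  apply: cL2; first by apply: Rplus_le_le_0_compat; [exact: P1|exact: P2].
  by apply: cD; [exact: L1|exact: L2'].
apply: cD.
  by apply: cM; [exact: cc|apply: cL2; [exact: P1|exact: L1]].
by apply: cM; [exact: cc|apply: cL2; [exact: P2|exact: L2']].
Qed.

End MC.

Lemma evt_box c1 c2 c3 c4 a1 a2 a3 b1 b2 M :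
  0 <= a1 -> 0 <= a2 -> 0 <= a3 -> 0 <= M ->
  exists x y, (0 <= x <= M) /\ (0 <= y <= M) /\ forall u v, 0 <= u <= M -> 0 <= v <= M ->
    psi c1 c2 c3 c4 a1 a2 a3 b1 b2 u v <= psi c1 c2 c3 c4 a1 a2 a3 b1 b2 x y.
Proof.
  intros Ha1 Ha2 Ha3 HM.
  destruct (MC.evt2 (fun q : R * R => psi c1 c2 c3 c4 a1 a2 a3 b1 b2 (Rabs (fst q)) (Rabs (snd q))) M HM
     (fun p => MC.psi_abs_cont c1 c2 c3 c4 a1 a2 a3 b1 b2 p Ha1 Ha2 Ha3))
    as [p [[Hp1 Hp2] [[Hp3 Hp4] Hp]]].
  exists (fst p), (snd p). split. lra. split. lra.
  intros u v Hu Hv. specialize (Hp (u, v)). simpl in Hp.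
  rewrite (Rabs_pos_eq u), (Rabs_pos_eq v), (Rabs_pos_eq (fst p)), (Rabs_pos_eq (snd p)) in Hp by lra.
  apply Hp; lra.
Qed.
Lemma psi_max c1 c2 c3 c4 a1 a2 a3 b1 b2 :
  0 <= c1 -> 0 <= c2 -> 0 <= c3 -> 0 <= c4 -> 0 <= a1 -> 0 <= a2 -> 0 <= a3 ->
  0 < b1 -> 0 < b2 ->
  exists x y, 0 <= x /\ 0 <= y /\ forall u v, 0 <= u -> 0 <= v ->
    psi c1 c2 c3 c4 a1 a2 a3 b1 b2 u v <= psi c1 c2 c3 c4 a1 a2 a3 b1 b2 x y.
Proof.
  intros Hc1 Hc2 Hc3 Hc4 Ha1 Ha2 Ha3 Hb1 Hb2.
  destruct (psi_bound c1 c2 c3 c4 a1 a2 a3 b1 b2) as [C [HC HB]]; auto.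
  set (M := 2 * C / b1 + 2 * C / b2).
  assert (HM1 : 0 <= 2 * C / b1) by (unfold Rdiv; apply Rmult_le_pos; [lra| left; apply Rinv_0_lt_compat; lra]).
  assert (HM2 : 0 <= 2 * C / b2) by (unfold Rdiv; apply Rmult_le_pos; [lra| left; apply Rinv_0_lt_compat; lra]).
  destruct (evt_box c1 c2 c3 c4 a1 a2 a3 b1 b2 M) as [x [y [Hx [Hy Hm]]]]; auto.
  unfold M; lra.
  exists x, y. split. lra. split. lra.
  assert (H0 : 0 <= psi c1 c2 c3 c4 a1 a2 a3 b1 b2 x y).
  { rewrite <- (psi00 c1 c2 c3 c4 a1 a2 a3 b1 b2). apply Hm; unfold M; lra. }
  intros u v Hu Hv.
  destruct (Rle_dec u M) as [Hu'|Hu']; [destruct (Rle_dec v M) as [Hv'|Hv']|].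
  - apply Hm; lra.
  - specialize (HB u v Hu Hv).
    assert (C < b2 / 2 * v).
    { assert (2 * C / b2 < v) by (unfold M in Hv'; lra).
      apply (Rmult_lt_compat_l (b2/2)) in H; [|lra].
      replace (b2 / 2 * (2 * C / b2)) with C in H by (field; lra). lra. }
    assert (0 <= b1 / 2 * u) by nra. lra.
  - specialize (HB u v Hu Hv).
    assert (C < b1 / 2 * u).
    { assert (2 * C / b1 < u) by (unfold M in Hu'; lra).
      apply (Rmult_lt_compat_l (b1/2)) in H; [|lra].
      replace (b1 / 2 * (2 * C / b1)) with C in H by (field; lra). lra. }
    assert (0 <= b2 / 2 * v) by nra. lra.
Qed.

Lemma psi_max1 c1 c4 a1 a2 a3 b1 b2 :
  0 <= c1 -> 0 <= c4 -> 0 <= a1 -> 0 <= a2 -> 0 <= a3 ->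
  0 < b1 -> 0 < b2 ->
  exists x, 0 <= x /\ forall u v, 0 <= u -> 0 <= v ->
    psi c1 0 0 c4 a1 a2 a3 b1 b2 u v <= psi c1 0 0 c4 a1 a2 a3 b1 b2 x 0.
Proof.
  intros. destruct (psi_max c1 0 0 c4 a1 a2 a3 b1 b2) as [x [y [Hx [Hy Hm]]]]; try lra.
  exists x. split. exact Hx. intros u v Hu Hv. eapply Rle_trans. apply Hm; auto.
  unfold psi. rewrite !Rmult_0_l. nra.
Qed.

Definition Sn (g : gain) (w mu lb1 lc1 : user -> R) (lAB : R) (alpha : user -> R) (aR : R)
  (p : assign) (q : power) (n : nat) : R :=
  sum_user (fun k => (w k + mu k) * F (ra p k) (sa q k * g (nd k) (nd (other k)) n)
     + lb1 k * F (rb1 p k) (sbR q k * g (nd k) NR n)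
     + (w k + mu k - lb1 k) * F (rb2 p k) (sRb q k * g NR (nd (other k)) n)
     + lc1 k * F (rc1 p) (scR q k * g (nd k) NR n)
     + (w k + mu k - lc1 k - lAB) * F (rc2 p) (sRc q * g NR (nd (other k)) n))
  + lAB * F (rc1 p) (scR q UA * g NA NR n + scR q UB * g NB NR n)
  - sum_user (fun k => alpha k * (sa q k + sbR q k + scR q k))
  - aR * (sum_user (fun k => sRb q k) + sRc q).

Lemma sumN_lin N (X Y ZA ZB W : nat -> R) (l aA aB aR0 PA PB PR0 m : R) :
  sumN N X + l * sumN N Y + (aA * (PA - sumN N ZA) + aB * (PB - sumN N ZB))
  + aR0 * (PR0 - sumN N W) - m
  = aA * PA + aB * PB + aR0 * PR0 - m
    + sumN N (fun n => X n + l * Y n - (aA * ZA n + aB * ZB n) - aR0 * W n).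
Proof.
  induction N; simpl. ring.
  assert (E : sumN N X + l * sumN N Y + (aA * (PA - sumN N ZA) + aB * (PB - sumN N ZB))
    + aR0 * (PR0 - sumN N W) - m - (aA * PA + aB * PB + aR0 * PR0 - m) =
    sumN N (fun n => X n + l * Y n - (aA * ZA n + aB * ZB n) - aR0 * W n)) by (rewrite IHN; ring).
  rewrite <- E. ring.
Qed.

Lemma lagr_decomp N g w mu lb1 lc1 lAB alpha aR P PR r rho s :
  lagr N g w mu lb1 lc1 lAB alpha aR P PR r rho s =
  alpha UA * P UA + alpha UB * P UB + aR * PR - sum_user (fun k => mu k * r k)
  + sumN N (fun n => Sn g w mu lb1 lc1 lAB alpha aR (rho n) (s n) n).
Proof.
  unfold lagr. cbv zeta. unfold sum_user at 2. apply sumN_lin.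
Qed.

Definition xi (w mu lc1 : user -> R) (lAB : R) k := w k + mu k - lc1 k - lAB.

Lemma Sn_decomp g w mu lb1 lc1 lAB alpha aR p q n :
  Sn g w mu lb1 lc1 lAB alpha aR p q n =
    Gam (w UA + mu UA) 0 0 0 (g NA NB n) 0 0 (alpha UA) 1 (ra p UA) (sa q UA) 0
  + Gam (w UB + mu UB) 0 0 0 (g NB NA n) 0 0 (alpha UB) 1 (ra p UB) (sa q UB) 0
  + Gam (lb1 UA) 0 0 0 (g NA NR n) 0 0 (alpha UA) 1 (rb1 p UA) (sbR q UA) 0
  + Gam (lb1 UB) 0 0 0 (g NB NR n) 0 0 (alpha UB) 1 (rb1 p UB) (sbR q UB) 0
  + Gam (w UA + mu UA - lb1 UA) 0 0 0 (g NR NB n) 0 0 aR 1 (rb2 p UA) (sRb q UA) 0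
  + Gam (w UB + mu UB - lb1 UB) 0 0 0 (g NR NA n) 0 0 aR 1 (rb2 p UB) (sRb q UB) 0
  + Gam (lc1 UA) (lc1 UB) lAB 0 (g NA NR n) (g NB NR n) 0 (alpha UA) (alpha UB) (rc1 p) (scR q UA) (scR q UB)
  + Gam (xi w mu lc1 lAB UA) 0 0 (xi w mu lc1 lAB UB) (g NR NB n) 0 (g NR NA n) aR 1 (rc2 p) (sRc q) 0.
Proof. unfold Sn, Gam, sum_user, xi. simpl. ring. Qed.

Definition uf (a b : R) : user -> R := fun k => match k with UA => a | UB => b end.

Definition feas1 (p : assign) (q : power) : Prop :=
    Forall (fun x => 0 <= x <= 1) (entries p) /\
    fold_right Rplus 0 (entries p) <= 1 /\
    (forall k, 0 <= sa q k /\ 0 <= sbR q k /\ 0 <= sRb q k /\ 0 <= scR q k) /\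
    0 <= sRc q.

Lemma Forall8 (P : R -> Prop) a b c d e f g h :
  Forall P [a;b;c;d;e;f;g;h] -> P a /\ P b /\ P c /\ P d /\ P e /\ P f /\ P g /\ P h.
Proof.
  intros H. rewrite Forall_forall in H.
  repeat split; apply H; simpl; tauto.
Qed.

Lemma Rmax_or a b : Rmax a b = a \/ Rmax a b = b.
Proof. apply (Rmax_case a b (fun z => z = a \/ z = b)); auto. Qed.


Ltac solve_disj := first [reflexivity | left; reflexivity | right; solve_disj].
Ltac feas_tac := unfold feas1, entries; simpl; split;
  [repeat (apply Forall_cons; [lra|]); apply Forall_nil
  | split; [lra | split; [intros []; simpl; lra | lra]]].
Ltac bin_tac := unfold entries; simpl; repeat (apply Forall_cons; [first [left; reflexivity | right; reflexivity]|]); apply Forall_nil.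

Lemma per_n (g : gain) (w mu lb1 lc1 alpha : user -> R) (lAB aR : R) (n : nat) :
  (forall j j' n, 0 <= g j j' n) ->
  (forall k, 0 <= w k) -> (forall k, 0 <= lb1 k) -> (forall k, 0 <= lc1 k) -> 0 <= lAB ->
  (forall k, 0 <= mu k) -> (forall k, 0 < alpha k) -> 0 < aR ->
  (forall k, 0 <= w k + mu k - lb1 k) ->
  (forall k, 0 <= w k + mu k - lc1 k - lAB) ->
  exists p q, feas1 p q /\ Forall (fun x => x = 0 \/ x = 1) (entries p) /\
    forall p' q', feas1 p' q' ->
      Sn g w mu lb1 lc1 lAB alpha aR p' q' n <= Sn g w mu lb1 lc1 lAB alpha aR p q n.
Proof.
  intros Hg Hw Hlb Hlc HAB Hmu Hal HaR Hb2 Hxi.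
  assert (HwA : 0 <= w UA + mu UA) by (specialize (Hw UA); specialize (Hmu UA); lra).
  assert (HwB : 0 <= w UB + mu UB) by (specialize (Hw UB); specialize (Hmu UB); lra).
  assert (HxA : 0 <= xi w mu lc1 lAB UA) by apply Hxi.
  assert (HxB : 0 <= xi w mu lc1 lAB UB) by apply Hxi.
  pose proof (Hal UA) as HaA. pose proof (Hal UB) as HaB.
  destruct (psi_max1 (w UA + mu UA) 0 (g NA NB n) 0 0 (alpha UA) 1) as [x1 [H1x H1]]; auto; try lra.
  destruct (psi_max1 (w UB + mu UB) 0 (g NB NA n) 0 0 (alpha UB) 1) as [x2 [H2x H2]]; auto; try lra.
  destruct (psi_max1 (lb1 UA) 0 (g NA NR n) 0 0 (alpha UA) 1) as [x3 [H3x H3]]; auto; try lra.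
  destruct (psi_max1 (lb1 UB) 0 (g NB NR n) 0 0 (alpha UB) 1) as [x4 [H4x H4]]; auto; try lra.
  destruct (psi_max1 (w UA + mu UA - lb1 UA) 0 (g NR NB n) 0 0 aR 1) as [x5 [H5x H5]]; auto; try lra.
  destruct (psi_max1 (w UB + mu UB - lb1 UB) 0 (g NR NA n) 0 0 aR 1) as [x6 [H6x H6]]; auto; try lra.
  destruct (psi_max (lc1 UA) (lc1 UB) lAB 0 (g NA NR n) (g NB NR n) 0 (alpha UA) (alpha UB))
    as [x7 [y7 [H7x [H7y H7]]]]; auto; try lra.
  destruct (psi_max1 (xi w mu lc1 lAB UA) (xi w mu lc1 lAB UB) (g NR NB n) 0 (g NR NA n) aR 1) as [x8 [H8x H8]]; auto; try lra.
  set (V1 := psi (w UA + mu UA) 0 0 0 (g NA NB n) 0 0 (alpha UA) 1 x1 0) in *.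
  set (V2 := psi (w UB + mu UB) 0 0 0 (g NB NA n) 0 0 (alpha UB) 1 x2 0) in *.
  set (V3 := psi (lb1 UA) 0 0 0 (g NA NR n) 0 0 (alpha UA) 1 x3 0) in *.
  set (V4 := psi (lb1 UB) 0 0 0 (g NB NR n) 0 0 (alpha UB) 1 x4 0) in *.
  set (V5 := psi (w UA + mu UA - lb1 UA) 0 0 0 (g NR NB n) 0 0 aR 1 x5 0) in *.
  set (V6 := psi (w UB + mu UB - lb1 UB) 0 0 0 (g NR NA n) 0 0 aR 1 x6 0) in *.
  set (V7 := psi (lc1 UA) (lc1 UB) lAB 0 (g NA NR n) (g NB NR n) 0 (alpha UA) (alpha UB) x7 y7) in *.
  set (V8 := psi (xi w mu lc1 lAB UA) 0 0 (xi w mu lc1 lAB UB) (g NR NB n) 0 (g NR NA n) aR 1 x8 0) in *.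
  assert (P1 : 0 <= V1) by (rewrite <- (psi00 (w UA + mu UA) 0 0 0 (g NA NB n) 0 0 (alpha UA) 1); apply H1; lra).
  assert (P2 : 0 <= V2) by (rewrite <- (psi00 (w UB + mu UB) 0 0 0 (g NB NA n) 0 0 (alpha UB) 1); apply H2; lra).
  assert (P3 : 0 <= V3) by (rewrite <- (psi00 (lb1 UA) 0 0 0 (g NA NR n) 0 0 (alpha UA) 1); apply H3; lra).
  assert (P4 : 0 <= V4) by (rewrite <- (psi00 (lb1 UB) 0 0 0 (g NB NR n) 0 0 (alpha UB) 1); apply H4; lra).
  assert (P5 : 0 <= V5) by (rewrite <- (psi00 (w UA + mu UA - lb1 UA) 0 0 0 (g NR NB n) 0 0 aR 1); apply H5; lra).
  assert (P6 : 0 <= V6) by (rewrite <- (psi00 (w UB + mu UB - lb1 UB) 0 0 0 (g NR NA n) 0 0 aR 1); apply H6; lra).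
  assert (P7 : 0 <= V7) by (rewrite <- (psi00 (lc1 UA) (lc1 UB) lAB 0 (g NA NR n) (g NB NR n) 0 (alpha UA) (alpha UB)); apply H7; lra).
  assert (P8 : 0 <= V8) by (rewrite <- (psi00 (xi w mu lc1 lAB UA) 0 0 (xi w mu lc1 lAB UB) (g NR NB n) 0 (g NR NA n) aR 1); apply H8; lra).
  set (Vm := Rmax V1 (Rmax V2 (Rmax V3 (Rmax V4 (Rmax V5 (Rmax V6 (Rmax V7 V8))))))).
  assert (M1 : V1 <= Vm) by (unfold Vm; apply Rmax_l).
  assert (M2 : V2 <= Vm) by (unfold Vm; eapply Rle_trans; [|apply Rmax_r]; apply Rmax_l).
  assert (M3 : V3 <= Vm) by (unfold Vm; eapply Rle_trans; [|apply Rmax_r]; eapply Rle_trans; [|apply Rmax_r]; apply Rmax_l).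
  assert (M4 : V4 <= Vm) by (unfold Vm; do 3 (eapply Rle_trans; [|apply Rmax_r]); apply Rmax_l).
  assert (M5 : V5 <= Vm) by (unfold Vm; do 4 (eapply Rle_trans; [|apply Rmax_r]); apply Rmax_l).
  assert (M6 : V6 <= Vm) by (unfold Vm; do 5 (eapply Rle_trans; [|apply Rmax_r]); apply Rmax_l).
  assert (M7 : V7 <= Vm) by (unfold Vm; do 6 (eapply Rle_trans; [|apply Rmax_r]); apply Rmax_l).
  assert (M8 : V8 <= Vm) by (unfold Vm; do 6 (eapply Rle_trans; [|apply Rmax_r]); apply Rmax_r).
  assert (UP : forall p' q', feas1 p' q' -> Sn g w mu lb1 lc1 lAB alpha aR p' q' n <= Vm).
  { intros p' q' [Hr [Hs [Hq Hc]]].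
    apply Forall8 in Hr. simpl in Hs.
    destruct Hr as [R1 [R2 [R3 [R4 [R5 [R6 [R7 R8]]]]]]].
    destruct (Hq UA) as [QA1 [QA2 [QA3 QA4]]]. destruct (Hq UB) as [QB1 [QB2 [QB3 QB4]]].
    rewrite Sn_decomp.
    pose proof (fun h1 h2 => Gam_bound _ _ _ _ _ _ _ _ _ _ _ (ra p' UA) (sa q' UA) 0 h1 h2 H1) as G1.
    specialize (G1 ltac:(lra) ltac:(lra) ltac:(lra) QA1 ltac:(lra)).
    pose proof (fun h1 h2 => Gam_bound _ _ _ _ _ _ _ _ _ _ _ (ra p' UB) (sa q' UB) 0 h1 h2 H2) as G2.
    specialize (G2 ltac:(lra) ltac:(lra) ltac:(lra) QB1 ltac:(lra)).
    pose proof (fun h1 h2 => Gam_bound _ _ _ _ _ _ _ _ _ _ _ (rb1 p' UA) (sbR q' UA) 0 h1 h2 H3) as G3.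
    specialize (G3 ltac:(lra) ltac:(lra) ltac:(lra) QA2 ltac:(lra)).
    pose proof (fun h1 h2 => Gam_bound _ _ _ _ _ _ _ _ _ _ _ (rb1 p' UB) (sbR q' UB) 0 h1 h2 H4) as G4.
    specialize (G4 ltac:(lra) ltac:(lra) ltac:(lra) QB2 ltac:(lra)).
    pose proof (fun h1 h2 => Gam_bound _ _ _ _ _ _ _ _ _ _ _ (rb2 p' UA) (sRb q' UA) 0 h1 h2 H5) as G5.
    specialize (G5 ltac:(lra) ltac:(lra) ltac:(lra) QA3 ltac:(lra)).
    pose proof (fun h1 h2 => Gam_bound _ _ _ _ _ _ _ _ _ _ _ (rb2 p' UB) (sRb q' UB) 0 h1 h2 H6) as G6.
    specialize (G6 ltac:(lra) ltac:(lra) ltac:(lra) QB3 ltac:(lra)).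
    pose proof (fun h1 h2 => Gam_bound _ _ _ _ _ _ _ _ _ _ _ (rc1 p') (scR q' UA) (scR q' UB) h1 h2 H7) as G7.
    specialize (G7 ltac:(lra) ltac:(lra) ltac:(lra) QA4 QB4).
    pose proof (fun h1 h2 => Gam_bound _ _ _ _ _ _ _ _ _ _ _ (rc2 p') (sRc q') 0 h1 h2 H8) as G8.
    specialize (G8 ltac:(lra) ltac:(lra) ltac:(lra) Hc ltac:(lra)).
    fold V1 in G1. fold V2 in G2. fold V3 in G3. fold V4 in G4. fold V5 in G5. fold V6 in G6. fold V7 in G7. fold V8 in G8.
    assert (ra p' UA * V1 <= ra p' UA * Vm) by (apply Rmult_le_compat_l; lra).
    assert (ra p' UB * V2 <= ra p' UB * Vm) by (apply Rmult_le_compat_l; lra).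
    assert (rb1 p' UA * V3 <= rb1 p' UA * Vm) by (apply Rmult_le_compat_l; lra).
    assert (rb1 p' UB * V4 <= rb1 p' UB * Vm) by (apply Rmult_le_compat_l; lra).
    assert (rb2 p' UA * V5 <= rb2 p' UA * Vm) by (apply Rmult_le_compat_l; lra).
    assert (rb2 p' UB * V6 <= rb2 p' UB * Vm) by (apply Rmult_le_compat_l; lra).
    assert (rc1 p' * V7 <= rc1 p' * Vm) by (apply Rmult_le_compat_l; lra).
    assert (rc2 p' * V8 <= rc2 p' * Vm) by (apply Rmult_le_compat_l; lra).
    assert (Vm0 : 0 <= Vm) by lra.
    assert ((ra p' UA + (ra p' UB + (rb1 p' UA + (rb1 p' UB + (rb2 p' UA + (rb2 p' UB + (rc1 p' + (rc2 p' + 0)))))))) * Vm <= 1 * Vm)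
      by (apply Rmult_le_compat_r; lra).
    lra. }
  assert (HV : Vm = V1 \/ Vm = V2 \/ Vm = V3 \/ Vm = V4 \/ Vm = V5 \/ Vm = V6 \/ Vm = V7 \/ Vm = V8).
  { unfold Vm.
    repeat (match goal with |- context [Rmax ?a ?b] => destruct (Rmax_or a b) as [E|E]; rewrite E; clear E end);
    solve_disj. }
  destruct HV as [E|[E|[E|[E|[E|[E|[E|E]]]]]]].
  - exists (mkAssign (uf 1 0) (uf 0 0) (uf 0 0) 0 0), (mkPower (uf x1 0) (uf 0 0) (uf 0 0) (uf 0 0) 0).
    split; [feas_tac|split; [bin_tac|]].
    intros p' q' Hf. eapply Rle_trans; [apply UP, Hf|].
    rewrite Sn_decomp. cbn [ra rb1 rb2 rc1 rc2 sa sbR sRb scR sRc uf].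
    rewrite ?Gam0, ?Gam1. fold V1. fold V2. fold V3. fold V4. fold V5. fold V6. fold V7. fold V8. lra.
  - exists (mkAssign (uf 0 1) (uf 0 0) (uf 0 0) 0 0), (mkPower (uf 0 x2) (uf 0 0) (uf 0 0) (uf 0 0) 0).
    split; [feas_tac|split; [bin_tac|]].
    intros p' q' Hf. eapply Rle_trans; [apply UP, Hf|].
    rewrite Sn_decomp. cbn [ra rb1 rb2 rc1 rc2 sa sbR sRb scR sRc uf].
    rewrite ?Gam0, ?Gam1. fold V1. fold V2. fold V3. fold V4. fold V5. fold V6. fold V7. fold V8. lra.
  - exists (mkAssign (uf 0 0) (uf 1 0) (uf 0 0) 0 0), (mkPower (uf 0 0) (uf x3 0) (uf 0 0) (uf 0 0) 0).
    split; [feas_tac|split; [bin_tac|]].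
    intros p' q' Hf. eapply Rle_trans; [apply UP, Hf|].
    rewrite Sn_decomp. cbn [ra rb1 rb2 rc1 rc2 sa sbR sRb scR sRc uf].
    rewrite ?Gam0, ?Gam1. fold V1. fold V2. fold V3. fold V4. fold V5. fold V6. fold V7. fold V8. lra.
  - exists (mkAssign (uf 0 0) (uf 0 1) (uf 0 0) 0 0), (mkPower (uf 0 0) (uf 0 x4) (uf 0 0) (uf 0 0) 0).
    split; [feas_tac|split; [bin_tac|]].
    intros p' q' Hf. eapply Rle_trans; [apply UP, Hf|].
    rewrite Sn_decomp. cbn [ra rb1 rb2 rc1 rc2 sa sbR sRb scR sRc uf].
    rewrite ?Gam0, ?Gam1. fold V1. fold V2. fold V3. fold V4. fold V5. fold V6. fold V7. fold V8. lra.
  - exists (mkAssign (uf 0 0) (uf 0 0) (uf 1 0) 0 0), (mkPower (uf 0 0) (uf 0 0) (uf x5 0) (uf 0 0) 0).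
    split; [feas_tac|split; [bin_tac|]].
    intros p' q' Hf. eapply Rle_trans; [apply UP, Hf|].
    rewrite Sn_decomp. cbn [ra rb1 rb2 rc1 rc2 sa sbR sRb scR sRc uf].
    rewrite ?Gam0, ?Gam1. fold V1. fold V2. fold V3. fold V4. fold V5. fold V6. fold V7. fold V8. lra.
  - exists (mkAssign (uf 0 0) (uf 0 0) (uf 0 1) 0 0), (mkPower (uf 0 0) (uf 0 0) (uf 0 x6) (uf 0 0) 0).
    split; [feas_tac|split; [bin_tac|]].
    intros p' q' Hf. eapply Rle_trans; [apply UP, Hf|].
    rewrite Sn_decomp. cbn [ra rb1 rb2 rc1 rc2 sa sbR sRb scR sRc uf].
    rewrite ?Gam0, ?Gam1. fold V1. fold V2. fold V3. fold V4. fold V5. fold V6. fold V7. fold V8. lra.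
  - exists (mkAssign (uf 0 0) (uf 0 0) (uf 0 0) 1 0), (mkPower (uf 0 0) (uf 0 0) (uf 0 0) (uf x7 y7) 0).
    split; [feas_tac|split; [bin_tac|]].
    intros p' q' Hf. eapply Rle_trans; [apply UP, Hf|].
    rewrite Sn_decomp. cbn [ra rb1 rb2 rc1 rc2 sa sbR sRb scR sRc uf].
    rewrite ?Gam0, ?Gam1. fold V1. fold V2. fold V3. fold V4. fold V5. fold V6. fold V7. fold V8. lra.
  - exists (mkAssign (uf 0 0) (uf 0 0) (uf 0 0) 0 1), (mkPower (uf 0 0) (uf 0 0) (uf 0 0) (uf 0 0) x8).
    split; [feas_tac|split; [bin_tac|]].
    intros p' q' Hf. eapply Rle_trans; [apply UP, Hf|].
    rewrite Sn_decomp. cbn [ra rb1 rb2 rc1 rc2 sa sbR sRb scR sRc uf].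
    rewrite ?Gam0, ?Gam1. fold V1. fold V2. fold V3. fold V4. fold V5. fold V6. fold V7. fold V8. lra.
Qed.

From Stdlib Require Import ClassicalEpsilon.

Lemma sumN_le N (f h : nat -> R) : (forall n, (n < N)%nat -> f n <= h n) -> sumN N f <= sumN N h.
Proof.
  induction N; intros H; simpl. lra.
  apply Rplus_le_compat. apply IHN. intros n Hn. apply H. lia. apply H. lia.
Qed.

Theorem proposition2 (N : nat) (g : gain)
  (w r mu lb1 lc1 alpha P : user -> R) (lAB aR PR : R) :
  (forall j j' n, 0 <= g j j' n) ->
  (forall k, 0 <= w k) -> (forall k, 0 <= r k) ->
  (forall k, 0 < P k) -> 0 < PR ->
  (forall k, 0 <= lb1 k) -> (forall k, 0 <= lc1 k) -> 0 <= lAB ->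
  (forall k, 0 <= mu k) ->
  (forall k, 0 < alpha k) -> 0 < aR ->
  (forall k, 0 <= w k + mu k - lb1 k) ->
  (forall k, 0 <= w k + mu k - lc1 k - lAB) ->
  exists (rho : nat -> assign) (s : nat -> power),
    feasible N rho s /\
    (forall n, (n < N)%nat -> Forall (fun x => x = 0 \/ x = 1) (entries (rho n))) /\
    (forall rho' s', feasible N rho' s' ->
       lagr N g w mu lb1 lc1 lAB alpha aR P PR r rho' s'
       <= lagr N g w mu lb1 lc1 lAB alpha aR P PR r rho s).
Proof.
  intros Hg Hw Hr HP HPR Hlb Hlc HAB Hmu Hal HaR Hb2 Hxi.
  assert (HC : forall n, exists pq : assign * power, feas1 (fst pq) (snd pq) /\
     Forall (fun x => x = 0 \/ x = 1) (entries (fst pq)) /\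
     forall p' q', feas1 p' q' ->
       Sn g w mu lb1 lc1 lAB alpha aR p' q' n <= Sn g w mu lb1 lc1 lAB alpha aR (fst pq) (snd pq) n).
  { intros n. destruct (per_n g w mu lb1 lc1 alpha lAB aR n) as [p [q H]]; auto.
    exists (p, q). exact H. }
  pose (ch := fun n => proj1_sig (constructive_indefinite_description _ (HC n))).
  assert (Hch : forall n, feas1 (fst (ch n)) (snd (ch n)) /\
     Forall (fun x => x = 0 \/ x = 1) (entries (fst (ch n))) /\
     forall p' q', feas1 p' q' ->
       Sn g w mu lb1 lc1 lAB alpha aR p' q' n <= Sn g w mu lb1 lc1 lAB alpha aR (fst (ch n)) (snd (ch n)) n).
  { intros n. unfold ch. exact (proj2_sig (constructive_indefinite_description _ (HC n))). }
  exists (fun n => fst (ch n)), (fun n => snd (ch n)).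
  split; [|split].
  - intros n Hn. exact (proj1 (Hch n)).
  - intros n Hn. exact (proj1 (proj2 (Hch n))).
  - intros rho' s' Hf. rewrite !lagr_decomp. apply Rplus_le_compat_l.
    apply sumN_le. intros n Hn. apply (proj2 (proj2 (Hch n))). exact (Hf n Hn).
Qed.
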